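(* Let $a=(a_1,a_2,\dots)$ be any real sequence, $p\in[1,\infty)$ and $w$ a weight sequence. Then $$\sup_{\sigma\in\Pi}\Big(\sum_{i=1}^\infty |a_{\sigma_i}|^p w_i\Big)^{1/p}=\sup_{\sigma\in\Psi}\Big(\sum_{i=1}^\infty |a_{\sigma_i}|^p w_i\Big)^{1/p},$$ where both sides are understood in $[0,+\infty]$.
   Context: A weight sequence is a sequence $w=(w_i)$ of positive reals with $w_1=1\ge w_2\ge\dots$, $w_i\to0$, and $\sum_i w_i=+\infty$. $\Pi$ denotes the set of all bijections $\sigma:\mathbb{N}\to\mathbb{N}$ (written as sequences $(\sigma_1,\sigma_2,\dots)$) and $\Psi$ the set of all injective maps $\sigma:\mathbb{N}\to\mathbb{N}$. *)

(* Defs.v *)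
(* Sequences are indexed from 0 (index i here = index i+1 in the paper). *)
From mathcomp Require Import all_boot all_order all_algebra.
From mathcomp Require Import all_classical all_reals all_analysis.
Set Implicit Arguments. Unset Strict Implicit. Unset Printing Implicit Defensive.
Import Order.TTheory GRing.Theory Num.Theory.
Local Open Scope ring_scope.
Local Open Scope classical_set_scope.

Definition weight_seq (R : realType) (w : nat -> R) : Prop :=
  [/\ forall i, 0 < w i,
      w 0%N = 1,
      (forall i, w i.+1 <= w i),
      w @ \oo --> 0
    & (\sum_(0 <= i <oo) (w i)%:E = +oo)%E].

Definition lorentz_val (R : realType) (a : nat -> R) (p : R) (w : nat -> R)
    (s : nat -> nat) : \bar R :=
  poweR (\sum_(0 <= i <oo) ((`|a (s i)| `^ p) * w i)%:E)%E p^-1.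

(* Main.v *)
Require Import Defs.
From mathcomp Require Import all_boot all_order all_algebra.
From mathcomp Require Import all_classical all_reals all_analysis.
Import Order.TTheory GRing.Theory Num.Theory.
Local Open Scope ring_scope.
Local Open Scope classical_set_scope.

Definition nswap (x y : nat) (n : nat) : nat :=
  if n == x then y else if n == y then x else n.

Lemma nswap_inv x y : involutive (nswap x y).
Proof.
move=> n; rewrite /nswap.
case: (eqVneq n x) => [->|nx]; first by rewrite eqxx; case: eqVneq.
case: (eqVneq n y) => [->|ny]; first by rewrite eqxx.
by rewrite (negbTE nx) (negbTE ny).
Qed.

Lemma extend_bij (s : nat -> nat) : injective s -> forall N : nat,
  exists t : nat -> nat, bijective t /\ forall i, (i < N)%N -> t i = s i.
Proof.
move=> si; elim=> [|N [t [bt ht]]].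
  by exists id; split => //; exists id.
exists (nswap (t N) (s N) \o t); split.
  by apply: bij_comp => //; apply: inv_bij; apply: nswap_inv.
move=> i; rewrite ltnS leq_eqVlt => /orP[/eqP ->|iN] /=.
  by rewrite /nswap eqxx.
rewrite /nswap ht //.
have -> : (s i == t N) = false.
  apply/negbTE; rewrite -ht //; apply/eqP => /(bij_inj bt) eiN.
  by move: iN; rewrite eiN ltnn.
have -> : (s i == s N) = false.
  apply/negbTE; apply/eqP => /si eiN.
  by move: iN; rewrite eiN ltnn.
by [].
Qed.

Theorem mainTheorem2 (R : realType) (a : nat -> R) (p : R) (w : nat -> R) :
  1 <= p -> weight_seq w ->
  ereal_sup [set lorentz_val a p w s | s in [set s : nat -> nat | bijective s]] =
  ereal_sup [set lorentz_val a p w s | s in [set s : nat -> nat | injective s]].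
Proof.
move=> p1 [w0 _ _ _ _].
have p0 : 0 < p by apply: lt_le_trans p1.
set E := ereal_sup _.
apply/eqP; rewrite eq_le; apply/andP; split.
  apply: le_ereal_sup => x [s /= bs <-]; exists s => //=.
  exact: bij_inj.
apply: ge_ereal_sup => x [s /= si <-].
have Eub : forall t, bijective t -> (lorentz_val a p w t <= E)%E.
  by move=> t bt; apply: ereal_sup_ubound; exists t.
have E0 : (0 <= E)%E.
  apply: le_trans (Eub id _); last by exists id.
  exact: poweR_ge0.
have T0 : forall t i, (0 <= ((`|a (t i)| `^ p) * w i)%:E)%E.
  by move=> t i; rewrite lee_fin mulr_ge0 ?powR_ge0 // ltW.
have Sle : forall t, bijective t ->
    (\sum_(0 <= i <oo) ((`|a (t i)| `^ p) * w i)%:E <= poweR E p)%E.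
  move=> t bt.
  set S := (\sum_(0 <= i <oo) _)%E.
  have S0 : (0 <= S)%E by apply: nneseries_ge0 => n _ _; exact: T0.
  have -> : S = poweR (poweR S p^-1) p.
    rewrite -poweRrM mulVf ?gt_eqF // poweRe1 //.
  apply: gt0_ler_poweR; first exact: ltW.
  - by rewrite in_itv /= poweR_ge0 leey.
  - by rewrite in_itv /= E0 leey.
  - exact: Eub.
rewrite /lorentz_val.
have -> : E = poweR (poweR E p) p^-1.
  by rewrite -poweRrM mulfV ?gt_eqF // poweRe1.
apply: gt0_ler_poweR.
- by rewrite invr_ge0 ltW.
- by rewrite in_itv /= leey andbT; apply: nneseries_ge0 => n _ _; exact: T0.
- by rewrite in_itv /= leey andbT poweR_ge0.
apply: lime_le; first by apply: is_cvg_nneseries => n _ _; exact: T0.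
apply: nearW => N.
have [t [bt ht]] := @extend_bij s si N.
have -> : (\sum_(0 <= i < N) ((`|a (s i)| `^ p) * w i)%:E =
           \sum_(0 <= i < N) ((`|a (t i)| `^ p) * w i)%:E)%E.
  by apply: eq_big_nat => i /andP[_ iN]; rewrite ht.
have H := @nneseries_lim_ge R (fun i => ((`|a (t i)| `^ p) * w i)%:E)%E xpredT 0%N N
  (fun n _ _ => T0 t n).
exact: (le_trans H (Sle t bt)).
Qed.
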